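(* Let $(X,\alpha,T)$ be a dynamical system with $T=\mathbb{Z}$ or $T=\mathbb{R}$ acting by homeomorphisms on a compact metrizable space $X$, and suppose that forward proximality and backward proximality are transitive relations. Then exactly one of the following two cases occurs. Case 1: the following equivalent statements hold: (i) proximality is transitive; (ii) $E$ has a unique minimal left ideal; (iii) $\mathcal M=\mathcal M^+=\mathcal M^-$; (iv) $J^+_{min}=J^-_{min}$. Case 2: the following equivalent statements hold: (i) proximality is not transitive; (ii) $E$ has exactly two minimal left ideals, namely $\mathcal M^+$ and $\mathcal M^-$; (iii) $\mathcal M^+\cap\mathcal M^-=\emptyset$; (iv) $J^+_{min}\cap J^-_{min}=\emptyset$.
   Context: $X$ is a compact metrizable space with metric $d$, $T=\mathbb{Z}$ or $\mathbb{R}$ acts by homeomorphisms $\alpha^t$ with $\alpha^{s+t}=\alpha^s\circ\alpha^t$, $\alpha^0=\mathrm{id}$; $T^+$ and $T^-$ denote the nonnegative and nonpositive elements of $T$. $X^X$ is the semigroup of all maps $X\to X$ under composition with the topology of pointwise convergence. $E=E(X,T)$ is the closure of $\{\alpha^t:t\in T\}$ in $X^X$ and $E^\pm$ is the closure of $\{\alpha^t:t\in T^\pm\}$; these are monoids under composition, each possessing a unique minimal two-sided ideal (kernel), denoted $\mathcal M$, $\mathcal M^+$, $\mathcal M^-$ respectively. An idempotent $p$ ($pp=p$) is minimal if it is minimal for the order $p\le q \iff p=pq=qp$; $J^\pm_{min}$ is the set of minimal idempotents of $E^\pm$. Points $x,y$ are proximal if $\inf_{t\in T}d(\alpha^t x,\alpha^t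 y)=0$, forward proximal if $\inf_{t\in T^+}d(\alpha^t x,\alpha^t y)=0$, backward proximal if $\inf_{t\in T^-}d(\alpha^t x,\alpha^t y)=0$. A left ideal of a semigroup $S$ is a non-empty $I\subset S$ with $SI\subset I$. *)

(* Defs.v *)
From HB Require Import structures.
From mathcomp Require Import all_boot all_order all_algebra.
From mathcomp Require Import all_classical all_reals all_analysis.
Set Implicit Arguments.
Unset Strict Implicit.
Unset Printing Implicit Defensive.
Import Order.TTheory GRing.Theory Num.Theory.
Local Open Scope classical_set_scope.
Local Open Scope ring_scope.

Definition left_ideal {X : Type} (S I : set (X -> X)) : Prop :=
  I !=set0 /\ I `<=` S /\ (forall s i, S s -> I i -> I (s \o i)).

Definition two_sided_ideal {X : Type} (S I : set (X -> X)) : Prop :=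
  I !=set0 /\ I `<=` S /\ (forall s i, S s -> I i -> I (s \o i)) /\
  (forall s i, S s -> I i -> I (i \o s)).

Definition minimal_left_ideal {X : Type} (S I : set (X -> X)) : Prop :=
  left_ideal S I /\ (forall J, left_ideal S J -> J `<=` I -> J = I).

Definition minimal_ideal {X : Type} (S I : set (X -> X)) : Prop :=
  two_sided_ideal S I /\ (forall J, two_sided_ideal S J -> J `<=` I -> J = I).

Definition idem_le {X : Type} (p q : X -> X) : Prop :=
  p = p \o q /\ p = q \o p.

Definition min_idempotents {X : Type} (S : set (X -> X)) : set (X -> X) :=
  [set p | S p /\ p \o p = p /\
     (forall q, S q -> q \o q = q -> idem_le q p -> q = p)].

Definition envelope {R : realType} {X : topologicalType}
  (alpha : R -> X -> X) (A : set R) : set (X -> X) :=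
  @closure {ptws X -> X} [set (alpha t : {ptws X -> X}) | t in A].

Definition proximal_on {R : realType} {X : metricType R}
  (alpha : R -> X -> X) (A : set R) (x y : X) : Prop :=
  inf [set mdist (alpha t x) (alpha t y) | t in A] = 0.

Definition transitive_rel {X : Type} (P : X -> X -> Prop) : Prop :=
  forall x y z, P x y -> P y z -> P x z.

Definition Tpos {R : realType} (T : set R) : set R := T `&` [set t | 0 <= t].
Definition Tneg {R : realType} (T : set R) : set R := T `&` [set t | t <= 0].

Definition is_Z_or_R {R : realType} (T : set R) : Prop :=
  T = [set: R] \/ T = [set t | exists z : int, t = z%:~R].

(* Main.v *)
Require Import Defs.
From HB Require Import structures.
From mathcomp Require Import all_boot all_order all_algebra.
From mathcomp Require Import all_classical all_reals all_analysis.
From mathcomp Require Import lra.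
Import Order.TTheory GRing.Theory Num.Theory.
Local Open Scope classical_set_scope.
Local Open Scope ring_scope.

Lemma min_closed {T : topologicalType} (Q : set T -> Prop) (A0 : set T) :
  compact A0 -> A0 !=set0 -> closed A0 -> Q A0 ->
  (forall C : set (set T), C !=set0 -> (forall B, C B -> Q B) ->
     Q (\bigcap_(B in C) B)) ->
  exists B, [/\ B `<=` A0, closed B, B !=set0, Q B &
    forall B', B' `<=` B -> closed B' -> B' !=set0 -> Q B' -> B' = B].
Proof.
move=> cA0 nA0 clA0 QA0 Qcap.
pose good (B : set T) := [/\ B `<=` A0, closed B, B !=set0 & Q B].
have gA0 : good A0 by split.
pose S := {B : set T | good B}.
pose Rl (a b : S) : bool := `[< sval b `<=` sval a >].
have [| | | |t tmax] := @Zorn S Rl.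
- by move=> a; apply/asboolP.
- by move=> a b c /asboolP ab /asboolP bc; apply/asboolP => x /bc /ab.
- move=> [a ga] [b gb] /asboolP /= ba /asboolP /= ab.
  by apply: eq_exist; apply/seteqP; split.
- move=> A Atot.
  have [[s0 As0]|nA] := pselect (exists s, A s); last first.
    exists (exist good A0 gA0) => s As; exfalso; apply: nA; by exists s.
  pose C := [set sval s | s in A].
  pose I := \bigcap_(B in C) B.
  have CQ : forall B, C B -> Q B by move=> _ [s _ <-]; case: (svalP s).
  have gI : good I.
    split.
    + move=> x Ix; have := Ix (sval s0) (ex_intro2 _ _ s0 As0 erefl).
      by case: (svalP s0) => + _ _ _; apply.
    + apply: closed_bigI => _ [s _ <-]; by case: (svalP s).
    + pose G := filter_from C id.
      have FG : Filter G.
        apply: filter_from_filter; first by exists (sval s0), s0.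
        move=> _ _ [a Aa <-] [b Ab <-].
        have [/asboolP ba|/asboolP ab] := Atot a b Aa Ab.
          by exists (sval b); [exists b|move=> x bx; split => //; apply: ba].
        by exists (sval a); [exists a|move=> x ax; split => //; apply: ab].
      have PG : ProperFilter G.
        by apply: filter_from_proper => _ [s _ <-]; case: (svalP s).
      have GA0 : G A0.
        exists (sval s0); first by exists s0.
        by case: (svalP s0).
      have [p [_ clp]] := cA0 G PG GA0.
      exists p => _ [s As <-].
      case: (svalP s) => _ cls _ _; apply: cls => U pU.
      by apply: (clp (sval s) U) => //; exists (sval s) => //; exists s.
    + by apply: Qcap => //; exists (sval s0), s0.
  exists (exist good I gI) => s As; apply/asboolP => /= x Ix.
  by apply: Ix; exists s.
- exists (sval t); case: (svalP t) => h1 h2 h3 h4; split => //.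
  move=> B' B'B clB' nB' QB'.
  have gB' : good B' by split => //; move=> x /B'B; apply: h1.
  have := tmax (exist good B' gB'); rewrite /Rl /= => /(_ (asboolT B'B)).
  by move=> /(congr1 sval).
Qed.
Section Semi.
Context {R : realType} {X : metricType R}.
Local Notation F := {ptws X -> X}.
Variable cX : compact [set: X].

Lemma F_hausdorff : hausdorff_space F.
Proof. apply: hausdorff_product => x. exact: metric_hausdorff. Qed.

Lemma F_compact : compact [set: F].
Proof.
have := @tychonoff X (fun _ => X) (fun _ => [set: X]) (fun _ => cX).
by congr compact; apply/seteqP; split.
Qed.

Lemma eval_cont (x : X) : continuous (fun p : F => p x).
Proof. exact: (@proj_continuous X (fun _ => X) x). Qed.

Lemma rmul_cont (q : X -> X) : continuous (fun p : F => (p \o q : F)).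
Proof.
move=> p; apply/(@pointwise_cvgP X X ((fun p : F => (p \o q : F)) @ nbhs p)) => t /=.
exact: (eval_cont (q t) p).
Qed.

Lemma lmul_cont (f : X -> X) : continuous f -> continuous (fun p : F => (f \o p : F)).
Proof.
move=> cf p; apply/(@pointwise_cvgP X X ((fun p : F => (f \o p : F)) @ nbhs p)) => t /=.
apply: (continuous_comp (eval_cont t p)); exact: cf.
Qed.

Lemma closed_eqz {T U : topologicalType} (g1 g2 : T -> U) : hausdorff_space U ->
  continuous g1 -> continuous g2 -> closed [set p | g1 p = g2 p].
Proof.
move=> hU c1 c2 p clp; apply: hU => U1 V nU nV.
have N : nbhs p (g1 @^-1` U1 `&` g2 @^-1` V).
  by apply: filterI; [exact: c1 | exact: c2].
have [q [eq [Uq Vq]]] := clp _ N.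
by exists (g1 q); split => //; rewrite eq.
Qed.

Lemma compact_of_closed (A : set (X -> X)) : @closed F A -> @compact F A.
Proof. move=> clA; exact: (subclosed_compact clA F_compact). Qed.

Lemma image_closed (A : set (X -> X)) (q : X -> X) : @closed F A ->
  @closed F [set a \o q | a in A].
Proof.
move=> clA; apply: (compact_closed F_hausdorff).
apply: (@continuous_compact F F (fun p : F => (p \o q : F))).
  exact/continuous_subspaceT/rmul_cont.
exact: compact_of_closed.
Qed.

Definition sg (A : set (X -> X)) := forall p q, A p -> A q -> A (p \o q).

Lemma EN (A : set (X -> X)) : @closed F A -> A !=set0 -> sg A ->
  exists2 u, A u & u \o u = u.
Proof.
move=> clA nA sA.
have [B [BA clB [a Ba] sB minB]] := @min_closed F sg A (compact_of_closed _ clA) nA clA sA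
  (fun C _ hC p q pC qC B CB => hC B CB p q (pC B CB) (qC B CB)).
have Ba_eq : [set b \o a | b in B] = B.
  apply: minB.
  - move=> _ [b Bb <-]; exact: sB.
  - exact: image_closed.
  - by exists (a \o a), a.
  - move=> _ _ [b Bb <-] [b' Bb' <-]; exists (b \o a \o b') => //.
    by apply: (sB) => //; exact: sB.
have [b Bb ba] : exists2 b, B b & b \o a = a.
  by move: Ba; rewrite -{1}Ba_eq => -[b Bb ba]; exists b.
pose W := B `&` [set b : F | (b \o a : F) = a].
have W_eq : W = B.
  apply: minB.
  - by move=> ? [].
  - apply: closedI => //.
    exact: (@closed_eqz F F (fun p : F => (p \o a : F)) (fun _ => (a : F)) F_hausdorff (rmul_cont a) (@cst_continuous _ _ _)).
  - by exists b.
  - move=> p q [Bp pa] [Bq qa]; split; first exact: sB.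
    by rewrite /= -compA qa pa.
have [_ aa] : W a by rewrite W_eq.
by exists a => //; exact: BA.
Qed.

End Semi.

Section Prox.
Context {R : realType} {X : metricType R}.
Local Notation F := {ptws X -> X}.

Lemma clos_sub {T : topologicalType} {G C : set T} :
  closed C -> G `<=` C -> closure G `<=` C.
Proof. by move=> cC GC x /(closureS GC) /cC. Qed.



Lemma ball_mdist (c z : X) (r : R) : ball c r z <-> mdist c z < r.
Proof. by rewrite ballEmdist. Qed.

Lemma near_pt (p : F) (x y : X) (e : R) : 0 < e ->
  nbhs p [set q : F | mdist (p x) (q x) < e /\ mdist (p y) (q y) < e].
Proof.
move=> e0.
have Nx : nbhs p ((fun q : F => q x) @^-1` ball (p x) e).
  by apply: eval_cont; exact: nbhsx_ballx.
have Ny : nbhs p ((fun q : F => q y) @^-1` ball (p y) e).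
  by apply: eval_cont; exact: nbhsx_ballx.
apply: filterS (filterI Nx Ny) => q [/= /ball_mdist h1 /ball_mdist h2]; by split.
Qed.

Lemma prox_char (alpha : R -> X -> X) (A : set R) (x y : X) :
  compact [set: X] -> A !=set0 ->
  proximal_on alpha A x y <-> exists2 p, envelope alpha A p & p x = p y.
Proof.
move=> cX [t0 At0].
pose D := [set mdist (alpha t x) (alpha t y) | t in A].
have nD : D !=set0 by exists (mdist (alpha t0 x) (alpha t0 y)), t0.
have lD : lbound D 0 by move=> _ [t _ <-]; exact: mdist_ge0.
have hlD : has_lbound D by exists 0.
rewrite /proximal_on -/D; split.
- move=> infD.
  pose B (e : R) : set F := [set q | exists2 t, A t /\ mdist (alpha t x) (alpha t y) < e & (alpha t : F) = q].
  pose G := filter_from [set e : R | 0 < e] B.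
  have Bne : forall e, 0 < e -> B e !=set0.
    move=> e e0; have := @inf_lt _ D e nD; rewrite infD => /(_ e0) [_ [t At <-] h].
    by exists (alpha t : F), t.
  have FG : Filter G.
    apply: filter_from_filter; first by exists 1; rewrite /mkset ltr01.
    move=> e1 e2 e10 e20.
    exists (Num.min e1 e2); first by rewrite /mkset lt_min e10 e20.
    move=> q [t [At h] <-]; move: h; rewrite lt_min => /andP[h1 h2].
    by split; exists t.
  have PG : ProperFilter G by apply: filter_from_proper.
  have cE : @compact F (envelope alpha A).
    apply: (@subclosed_compact _ _ [set: F]); first exact: closed_closure.
      have := @tychonoff X (fun _ => X) (fun _ => [set: X]) (fun _ => cX).
      by congr compact; apply/seteqP; split.
    by [].
  have GE : G (envelope alpha A).
    exists 1; first by rewrite /mkset ltr01.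
    move=> q [t [At _] <-]; apply: subset_closure; by exists t.
  have [p [Ep clp]] := cE G PG GE.
  exists p => //.
  apply/eqP/negPn; rewrite -mdist_gt0; apply/negP => r0.
  set r := mdist (p x) (p y) in r0 *.
  have e0 : 0 < r / 3 by rewrite divr_gt0.
  have GB : G (B (r / 3)) by exists (r / 3).
  have [_ [[t [At h] <-] [/= h1 h2]]] := clp (B (r / 3)) _ GB (@near_pt p x y _ e0).
  have := metric_triangle (p x) (alpha t x) (p y).
  have := metric_triangle (alpha t x) (alpha t y) (p y).
  rewrite (metric_sym (alpha t y) (p y)) -/r.
  lra.
- move=> [p Ep pxy].
  apply/eqP; rewrite eq_le; apply/andP; split; last exact: lb_le_inf.
  apply/ler_addgt0Pr => e e0; rewrite add0r.
  have e20 : 0 < e / 2 by rewrite divr_gt0.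
  have [_ [[t At <-] [/= h1 h2]]] := Ep _ (@near_pt p x y _ e20).
  apply: (le_trans (ge_inf hlD (ex_intro2 _ _ t At erefl))).
  rewrite pxy in h1.
  have := metric_triangle (alpha t x) (p y) (alpha t y).
  rewrite (metric_sym (alpha t x) (p y)).
  lra.
Qed.
End Prox.

Section Ideals.
Context {R : realType} {X : metricType R}.
Local Notation F := {ptws X -> X}.
Variable cX : compact [set: X].
Variable S : set (X -> X).
Hypothesis clS : @closed F S.
Hypothesis sgS : sg S.
Hypothesis nS : S !=set0.

Local Notation minL := (minimal_left_ideal S).

Definition Sp (p : X -> X) := [set s \o p | s in S].

Lemma Sp_left {p} : S p -> left_ideal S (Sp p).
Proof.
move=> Sp0; have [s Ss] := nS; split; first by exists (s \o p), s.
split; first by move=> _ [s' Ss' <-]; exact: sgS.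
move=> s' _ Ss' [s'' Ss'' <-]; exists (s' \o s'') => //; exact: sgS.
Qed.

Lemma Sp_closed p : @closed F (Sp p).
Proof. exact: (image_closed cX). Qed.

Lemma minL_exists I : left_ideal S I -> exists L, minL L /\ L `<=` I.
Proof.
move=> [[i Ii] [IS Iid]].
pose Q (B : set F) := B `<=` S /\ (forall s b, S s -> B b -> B (s \o b)).
have QSp : forall p, S p -> Q (Sp p).
  by move=> p Sp0; have [_ [h1 h2]] := Sp_left Sp0; split.
have nSi : (Sp i : set F) !=set0.
  by have [s Ss] := nS; exists (s \o i), s.
have Qcap : forall C : set (set F), C !=set0 -> (forall B, C B -> Q B) ->
    Q (\bigcap_(B in C) B).
  move=> C [B0 CB0] hC; split; first by move=> p Cp; apply: (hC B0 CB0).1; exact: Cp.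
  by move=> s b Ss Cb B' CB'; apply: (hC B' CB').2 => //; exact: Cb.
have [B [BSi clB nB [BS Bid] minB]] := @min_closed F Q (Sp i)
  (compact_of_closed cX _ (Sp_closed i)) nSi (Sp_closed i) (QSp i (IS i Ii)) Qcap.
exists B; split; last first.
  by move=> p /BSi [s Ss <-]; exact: Iid.
split; first by split.
move=> J [[j Jj] [JS Jid]] JB.
have Sj_eq : Sp j = B.
  apply: minB.
  - by move=> _ [s Ss <-]; apply: JB; exact: Jid.
  - exact: Sp_closed.
  - by have [s Ss] := nS; exists (s \o j), s.
  - exact: QSp (JS j Jj).
apply/seteqP; split => //; rewrite -Sj_eq => _ [s Ss <-]; exact: Jid.
Qed.

Lemma minL_Sp {L p} : minL L -> L p -> Sp p = L.
Proof.
move=> [[nL [LS Lid]] minl] Lp; apply: minl.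
  exact: Sp_left (LS p Lp).
by move=> _ [s Ss <-]; exact: Lid.
Qed.

Lemma minL_closed {L} : minL L -> @closed F L.
Proof.
move=> mL; have [[p Lp] _] := mL.1; rewrite -(minL_Sp mL Lp); exact: Sp_closed.
Qed.

Lemma minL_Lp {L p} : minL L -> L p -> [set l \o p | l in L] = L.
Proof.
move=> mL Lp; have [[nL [LS Lid]] minl] := mL; apply: minl.
  split; first by exists (p \o p), p.
  split; first by move=> _ [l Ll <-]; apply: sgS; exact: LS.
  move=> s _ Ss [l Ll <-]; exists (s \o l) => //; exact: Lid.
by move=> _ [l Ll <-]; apply: Lid => //; exact: LS.
Qed.

Lemma minL_idem {L} : minL L -> exists2 u, L u & u \o u = u.
Proof.
move=> mL; have [[nL [LS Lid]] _] := mL.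
apply: (EN cX) => //; first exact: minL_closed.
move=> p q Lp Lq; apply: Lid => //; exact: LS.
Qed.

Lemma minL_rid {L u w} : minL L -> L u -> u \o u = u -> L w -> w \o u = w.
Proof.
move=> mL Lu uu; rewrite -{1}(minL_Lp mL Lu) => -[l Ll <-].
by rewrite -compA uu.
Qed.

Lemma minL_eq {L1 L2 p} : minL L1 -> minL L2 -> L1 p -> L2 p -> L1 = L2.
Proof. by move=> m1 m2 p1 p2; rewrite -(minL_Sp m1 p1) -(minL_Sp m2 p2). Qed.

Lemma minL_right {L s} : minL L -> S s -> minL [set l \o s | l in L].
Proof.
move=> mL Ss; have [[[l0 Ll0] [LS Lid]] minl] := mL.
have li : left_ideal S [set l \o s | l in L].
  split; first by exists (l0 \o s), l0.
  split; first by move=> _ [l Ll <-]; apply: sgS => //; exact: LS.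
  move=> s' _ Ss' [l Ll <-]; exists (s' \o l) => //; exact: Lid.
split => // J [[j Jj] [JS Jid]] JLs.
pose K := [set l | L l /\ J (l \o s)].
have K_eq : K = L.
  apply: minl; last by move=> ? [].
  have [l Ll ls] := JLs j Jj.
  split; first by exists l; split => //; rewrite ls.
  split; first by move=> ? [? _]; exact: LS.
  move=> s' l' Ss' [Ll' Jl']; split; first exact: Lid.
  exact: (Jid s' (l' \o s)).
apply/seteqP; split => // _ [l Ll <-].
by have [] : K l by rewrite K_eq.
Qed.

Definition proxS (x y : X) := exists2 p, S p & p x = p y.

Lemma unique_trans L : minL L -> (forall L', minL L' -> L' = L) ->
  forall x y z, proxS x y -> proxS y z -> proxS x z.
Proof.
move=> mL uL.
have [u Lu uu] := minL_idem mL.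
have key : forall x y, proxS x y -> u x = u y.
  move=> x y [p Sp0 pxy].
  have : [set l \o p | l in L] u by rewrite (uL _ (minL_right mL Sp0)).
  by move=> [l _ <-] /=; rewrite pxy.
move=> x y z /key h1 /key h2; exists u; first by have [[_ [LS _]] _] := mL; exact: LS.
by rewrite h1 h2.
Qed.

Lemma trans_unique L1 L2 : minL L1 -> minL L2 ->
  (forall x y z, proxS x y -> proxS y z -> proxS x z) -> L1 = L2.
Proof.
move=> m1 m2 tr.
have [[_ [L1S L1id]] min1] := m1.
have [[_ [L2S L2id]] min2] := m2.
have [v L2v vv] := minL_idem m2.
have [q L1q qv] : exists2 q, L1 q & q \o v = v.
  have [l1 L1l1] := m1.1.1.
  have e : [set l \o v | l in L1] = L2.
    apply: (minL_eq (minL_right m1 (L2S v L2v)) m2 (p := l1 \o v)).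
      by exists l1.
    by apply: L2id => //; exact: L1S.
  by move: L2v; rewrite -{1}e => -[q L1q qv]; exists q.
pose W := L1 `&` [set q : F | (q \o v : F) = v].
have [u [L1u uv] uu] : exists2 u, W u & u \o u = u.
  apply: (EN cX).
  - apply: closedI; first exact: minL_closed.
    exact: (@closed_eqz F F (fun p : F => (p \o v : F)) (fun _ => (v : F)) (F_hausdorff)
      (rmul_cont v) (@cst_continuous _ _ _)).
  - by exists q.
  - move=> p p' [L1p pv] [L1p' p'v]; split; first by apply: L1id => //; exact: L1S.
    by rewrite /= -compA p'v pv.
have uxvx : forall x, u x = v x.
  move=> x.
  have h1 : proxS (u x) x by exists u; [exact: L1S | rewrite /= -[u (u x)]/((u \o u) x) uu].
  have h2 : proxS x (v x) by exists v; [exact: L2S | rewrite /= -[v (v x)]/((v \o v) x) vv].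
  have [p Sp0 pz] := tr _ _ _ h1 h2.
  pose K := [set k | S k /\ k (u x) = k (v x)].
  have Kli : left_ideal S [set k \o u | k in K].
    split; first by exists (p \o u), p.
    split; first by move=> _ [k [Sk _] <-]; exact: sgS (L1S u L1u).
    move=> s _ Ss [k [Sk kz] <-]; exists (s \o k) => //; split; first exact: sgS.
    by rewrite /= kz.
  have Ke : [set k \o u | k in K] = L1.
    apply: min1 => // _ [k [Sk _] <-]; exact: L1id.
  have : [set k \o u | k in K] u by rewrite Ke.
  move=> [k [Sk kz] ku].
  have uz : u (u x) = u x by rewrite -[u (u x)]/((u \o u) x) uu.
  have uz' : u (v x) = v x by rewrite -[u (v x)]/((u \o v) x) uv.
  have kuz : forall z, k (u z) = u z by move=> z; exact: (congr1 (fun f => f z) ku).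
  have h : k (u x) = k (u (v x)) by rewrite uz'; exact: kz.
  by rewrite !kuz uz' in h.
have uv_eq : u = v by apply: funext.
by apply: (minL_eq m1 m2 L1u); rewrite uv_eq.
Qed.

Lemma unique_two_sided L : minL L -> (forall L', minL L' -> L' = L) ->
  forall l s, L l -> S s -> L (l \o s).
Proof.
move=> mL uL l s Ll Ss.
by rewrite -(uL _ (minL_right mL Ss)); exists l.
Qed.

Lemma kernel_eq L M : minL L -> (forall L', minL L' -> L' = L) ->
  minimal_ideal S M -> M = L.
Proof.
move=> mL uL [[[m Mm] [MS [Mlid Mrid]]] minM].
have [[[l Ll] [LS Lid]] minl] := mL.
have LM : L `<=` M.
  have lm1 : L (l \o m) by apply: unique_two_sided => //; exact: MS.
  have lm2 : M (l \o m) by apply: Mlid => //; exact: LS.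
  rewrite -(minL_Sp mL lm1) => _ [s Ss <-]; exact: Mlid.
apply: esym; apply: minM => //.
split; first by exists l.
split => //; split => //.
by move=> s l' Ss Ll'; exact: unique_two_sided.
Qed.

Lemma min_idem_char L : minL L -> (forall L', minL L' -> L' = L) ->
  min_idempotents S = [set p | L p /\ p \o p = p].
Proof.
move=> mL uL; have [[_ [LS Lid]] _] := mL.
apply/seteqP; split.
- move=> p [Sp0 [pp pmin]].
  have [u Lu uu] := minL_idem mL.
  have up : u \o p = u.
    have : [set l \o p | l in L] u by rewrite (uL _ (minL_right mL Sp0)).
    by move=> [l _ <-]; rewrite -compA pp.
  have Lq : L (p \o u) by exact: Lid.
  have qq : (p \o u) \o (p \o u) = p \o u.
    by rewrite compA -(compA p u p) up -compA uu.
  have := pmin (p \o u) (LS _ Lq) qq.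
  have le : idem_le (p \o u) p.
    split; first by rewrite -compA up.
    by rewrite compA pp.
  move=> /(_ le) e; split => //; rewrite -e //.
- move=> p [Lp pp]; split; first exact: LS.
  split => // q Sq qq [qe1 qe2].
  have Lq : L q by rewrite qe2; exact: unique_two_sided.
  by rewrite qe2 (minL_rid mL Lq qq Lp).
Qed.

End Ideals.

Section Dyn.
Context {R : realType} {X : metricType R}.
Local Notation F := {ptws X -> X}.
Variable cX : compact [set: X].
Variable T : set R.
Variable alpha : R -> X -> X.
Hypothesis hT : is_Z_or_R T.
Hypothesis hcont : forall t, T t -> continuous (alpha t).
Hypothesis h0 : alpha 0 = id.
Hypothesis hadd : forall s t, T s -> T t -> alpha (s + t) = alpha s \o alpha t.

Lemma T0 : T 0.
Proof. by case: hT => ->; last exists 0%Z; rewrite ?mulr0z. Qed.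

Lemma TD s t : T s -> T t -> T (s + t).
Proof.
case: hT => -> //= [a ->] [b ->]; exists (a + b)%Z; by rewrite intrD.
Qed.

Lemma TN t : T t -> T (- t).
Proof. case: hT => -> //= [a ->]; exists (- a)%Z; by rewrite intrN. Qed.

Local Notation E A := (envelope alpha A).

Lemma E_closed A : @closed F (E A).
Proof. exact: closed_closure. Qed.

Lemma E_gen A t : A t -> E A (alpha t).
Proof. by move=> At; apply: subset_closure; exists t. Qed.

Lemma E_sub A B : A `<=` B -> E A `<=` E B.
Proof. by move=> AB; apply: (@closureS F) => _ [t At <-]; exists t => //; exact: AB. Qed.

Lemma E_sg A : A `<=` T -> (forall s t, A s -> A t -> A (s + t)) -> sg (E A).
Proof.
move=> AT Aadd.
have step1 : forall s q, A s -> E A q -> E A (alpha s \o q).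
  move=> s q As Eq.
  have clC : @closed F [set q : F | E A (alpha s \o q)].
    apply: (preimage_closed (f := fun q : F => (alpha s \o q : F))) => //.
      by move=> z _; have h := lmul_cont _ (hcont _ (AT _ As)) z; exact h.
    exact: E_closed.
  suff GC : [set (alpha t : F) | t in A] `<=` [set q : F | E A (alpha s \o q)].
    have h := clos_sub clC GC. exact (h q Eq).
  move=> _ [t At <-] /=.
  rewrite -hadd; [apply: E_gen; exact: Aadd | exact: AT | exact: AT].
move=> p q Ep Eq.
have clC : @closed F [set p : F | E A (p \o q)].
  apply: (preimage_closed (f := fun p : F => (p \o q : F))) => //.
    by move=> z _; exact: (rmul_cont q z).
  exact: E_closed.
suff GC : [set (alpha t : F) | t in A] `<=` [set p : F | E A (p \o q)].
  have h := clos_sub clC GC. exact (h p Ep).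
by move=> _ [t At <-] /=; exact: step1.
Qed.

Lemma E_comm t p : T t -> E T p -> alpha t \o p = p \o alpha t.
Proof.
move=> Tt Ep; apply: funext => x /=.
have clC : @closed F [set q : F | alpha t (q x) = q (alpha t x)].
  apply: (@closed_eqz F X (fun q : F => alpha t (q x)) (fun q : F => q (alpha t x)) (@metric_hausdorff _ X)).
    move=> q; apply: continuous_comp; [exact: eval_cont | exact: hcont].
  exact: eval_cont.
suff GC : [set (alpha t : F) | t in T] `<=` [set q : F | alpha t (q x) = q (alpha t x)].
  have h := clos_sub clC GC. exact (h p Ep).
move=> _ [s Ts <-] /=.
have e1 := hadd _ _ Tt Ts; have e2 := hadd _ _ Ts Tt.
rewrite addrC in e1.
by rewrite -[alpha t (alpha s x)]/((alpha t \o alpha s) x) -e1 e2.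
Qed.

Lemma E_split : E T = E (Tpos T) `|` E (Tneg T).
Proof.
rewrite /envelope -(@closureU F); congr (@closure F _).
apply/seteqP; split.
  move=> _ [t Tt <-]; have [t0|t0] := leP 0 t.
    by left; exists t => //; split.
  by right; exists t => //; split => //; rewrite /= ltW.
by move=> _ [[t [Tt _] <-]|[t [Tt _] <-]]; exists t.
Qed.

Lemma trans_iff (A : set R) : A !=set0 ->
  transitive_rel (proximal_on alpha A) <->
  (forall x y z, proxS (E A) x y -> proxS (E A) y z -> proxS (E A) x z).
Proof.
move=> nA; split.
- move=> tr x y z h1 h2; apply/(prox_char alpha A x z cX nA).
  apply: (tr x y z); [exact/(prox_char alpha A x y cX nA) | exact/(prox_char alpha A y z cX nA)].
- move=> tr x y z h1 h2; apply/(prox_char alpha A x z cX nA).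
  apply: (tr x y z); [exact/(prox_char alpha A x y cX nA) | exact/(prox_char alpha A y z cX nA)].
Qed.

Lemma half (A : set R) (Mh : set (X -> X)) :
  A `<=` T -> A 0 -> (forall s t, A s -> A t -> A (s + t)) ->
  (forall t, T t -> A t \/ A (- t)) ->
  minimal_ideal (E A) Mh -> transitive_rel (proximal_on alpha A) ->
  [/\ minimal_left_ideal (E A) Mh,
      (forall L', minimal_left_ideal (E A) L' -> L' = Mh),
      minimal_left_ideal (E T) Mh &
      min_idempotents (E A) = [set p | Mh p /\ p \o p = p]].
Proof.
move=> AT A0 Aadd Asym hM htr.
have clA : @closed F (E A) := E_closed A.
have sgA : sg (E A) := E_sg A AT Aadd.
have nA : E A !=set0 by exists (alpha 0); exact: E_gen.
have nA' : A !=set0 by exists 0.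
have trS := (trans_iff A nA').1 htr.
have liA : left_ideal (E A) (E A) by split => //; split.
have [L [mL _]] := minL_exists cX (E A) clA sgA nA (E A) liA.
have uL : forall L', minimal_left_ideal (E A) L' -> L' = L.
  by move=> L' mL'; exact: (trans_unique cX (E A) clA sgA nA L' L mL' mL trS).
have ML : Mh = L := kernel_eq (E A) sgA nA L Mh mL uL hM.
subst Mh.
split => //; last exact: (min_idem_char cX (E A) clA sgA nA L mL uL).
have [[nL [LS Lid]] minl] := mL.
have ETsub : E A `<=` E T := E_sub _ _ AT.
have clL := minL_closed cX (E A) clA sgA nA mL.
have lt : forall t m, T t -> L m -> L (alpha t \o m).
  move=> t m Tt Lm; case: (Asym t Tt) => At.
    by apply: Lid => //; exact: E_gen.
  have : [set l \o alpha (- t) | l in L] m.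
    by rewrite (uL _ (minL_right (E A) sgA mL (E_gen _ _ At))).
  move=> [m' Lm' <-].
  rewrite compA (E_comm _ _ Tt (ETsub _ (LS _ Lm'))) -compA.
  by rewrite -(hadd _ _ Tt (TN _ Tt)) subrr h0.
have Elt : forall p m, E T p -> L m -> L (p \o m).
  move=> p m Ep Lm.
  have clC : @closed F [set q : F | L (q \o m)].
    apply: (preimage_closed (f := fun q : F => (q \o m : F))) => //.
    by move=> z _; exact: (rmul_cont m z).
  suff GC : [set (alpha t : F) | t in T] `<=` [set q : F | L (q \o m)].
    have h := clos_sub clC GC. exact (h p Ep).
  by move=> _ [t Tt <-]; exact: lt.
split.
  split => //; split; first by move=> m /LS /ETsub.
  move=> s m Es Lm; exact: Elt.
move=> J [nJ [JS Jid]] JL; apply: minl => //.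
split => //; split; first by move=> j /JL /LS.
move=> s j As Jj; apply: Jid => //; exact: ETsub.
Qed.


Lemma main (M Mp Mm : set (X -> X)) :
  minimal_ideal (E T) M ->
  minimal_ideal (E (Tpos T)) Mp ->
  minimal_ideal (E (Tneg T)) Mm ->
  transitive_rel (proximal_on alpha (Tpos T)) ->
  transitive_rel (proximal_on alpha (Tneg T)) ->
  let a1 := transitive_rel (proximal_on alpha T) in
  let a2 := exists! L, minimal_left_ideal (E T) L in
  let a3 := M = Mp /\ Mp = Mm in
  let a4 := min_idempotents (E (Tpos T)) = min_idempotents (E (Tneg T)) in
  let b1 := ~ transitive_rel (proximal_on alpha T) in
  let b2 := Mp <> Mm /\
              (forall L, minimal_left_ideal (E T) L <-> (L = Mp \/ L = Mm)) in
  let b3 := Mp `&` Mm = set0 in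
  let b4 := min_idempotents (E (Tpos T)) `&` min_idempotents (E (Tneg T)) = set0 in
  (a1 /\ a2 /\ a3 /\ a4 /\ ~ b1 /\ ~ b2 /\ ~ b3 /\ ~ b4) \/
  (~ a1 /\ ~ a2 /\ ~ a3 /\ ~ a4 /\ b1 /\ b2 /\ b3 /\ b4).
Proof.
move=> hM hMp hMm trp trm a1 a2 a3 a4 b1 b2 b3 b4.
have Tp0 : Tpos T 0 by split; [exact: T0 | exact: lexx].
have Tn0 : Tneg T 0 by split; [exact: T0 | exact: lexx].
have Tpadd : forall s t, Tpos T s -> Tpos T t -> Tpos T (s + t).
  move=> s t [Ts s0] [Tt t0]; split; [exact: TD | exact: addr_ge0].
have Tnadd : forall s t, Tneg T s -> Tneg T t -> Tneg T (s + t).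
  move=> s t [Ts s0] [Tt t0]; split; first exact: TD.
  rewrite /mkset in s0 t0 *; lra.
have Tpsym : forall t, T t -> Tpos T t \/ Tpos T (- t).
  move=> t Tt; have [t0|t0] := leP 0 t; first by left.
  right; split; first exact: TN.
  rewrite /mkset; lra.
have Tnsym : forall t, T t -> Tneg T t \/ Tneg T (- t).
  move=> t Tt; have [t0|t0] := leP t 0; first by left.
  right; split; first exact: TN.
  rewrite /mkset; lra.
have [mLp uLp mLpT Jp] := half (Tpos T) Mp (fun t h => proj1 h) Tp0 Tpadd Tpsym hMp trp.
have [mLm uLm mLmT Jm] := half (Tneg T) Mm (fun t h => proj1 h) Tn0 Tnadd Tnsym hMm trm.
have clT : @closed F (E T) := E_closed T.
have sgT : sg (E T) := E_sg T (fun t Tt => Tt) TD.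
have nT : E T !=set0 by exists (alpha 0); apply: E_gen; exact: T0.
have nT' : T !=set0 by exists 0; exact: T0.
have sgP : sg (E (Tpos T)) := E_sg _ (fun t h => proj1 h) Tpadd.
have sgN : sg (E (Tneg T)) := E_sg _ (fun t h => proj1 h) Tnadd.
have subP : E (Tpos T) `<=` E T := E_sub _ _ (fun t h => proj1 h).
have subN : E (Tneg T) `<=` E T := E_sub _ _ (fun t h => proj1 h).
have cases : forall L, minimal_left_ideal (E T) L -> L = Mp \/ L = Mm.
  move=> L mL; have [[[p Lp] [LS Lid]] _] := mL.
  have := LS p Lp; rewrite E_split => -[Ep|Em].
  - left; have [[[m Mpm] [MpS _]] _] := mLp.
    have h1 : Mp (m \o p) := unique_two_sided (E (Tpos T)) sgP Mp mLp uLp m p Mpm Ep.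
    have h2 : L (m \o p) by apply: Lid => //; apply: subP; exact: MpS.
    exact: (minL_eq (E T) sgT nT mL mLpT h2 h1).
  - right; have [[[m Mmm] [MmS _]] _] := mLm.
    have h1 : Mm (m \o p) := unique_two_sided (E (Tneg T)) sgN Mm mLm uLm m p Mmm Em.
    have h2 : L (m \o p) by apply: Lid => //; apply: subN; exact: MmS.
    exact: (minL_eq (E T) sgT nT mL mLmT h2 h1).
have [u Mpu uu] := minL_idem cX (E (Tpos T)) (E_closed _) sgP (ex_intro _ (alpha 0) (E_gen _ _ Tp0)) mLp.
have Jpu : min_idempotents (E (Tpos T)) u by rewrite Jp.
have [eq|neq] := pselect (Mp = Mm).
- subst Mm.
  have uT : forall L, minimal_left_ideal (E T) L -> L = Mp.
    by move=> L /cases [].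
  have ha1 : a1.
    apply/(trans_iff T nT').
    exact: (unique_trans cX (E T) clT sgT nT Mp mLpT uT).
  left; split => //.
  split; first by exists Mp; split => // L' /uT ->.
  split; first by split => //; exact: (kernel_eq (E T) sgT nT Mp M mLpT uT hM).
  split; first by rewrite /a4 Jp Jm.
  split; first by move=> /(_ ha1).
  split; first by move=> [].
  split.
    by move=> h; have : (Mp `&` Mp) u by [] ; rewrite h.
  move=> h; have : (min_idempotents (E (Tpos T)) `&` min_idempotents (E (Tneg T))) u.
    by split => //; rewrite Jm -Jp.
  by rewrite h.
- have disj : forall p, Mp p -> Mm p -> False.
    by move=> p h1 h2; apply: neq; exact: (minL_eq (E T) sgT nT mLpT mLmT h1 h2).
  have na1 : ~ a1.
    move=> /(trans_iff T nT') tr; apply: neq.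
    exact: (trans_unique cX (E T) clT sgT nT Mp Mm mLpT mLmT tr).
  right; split => //.
  split.
    move=> [L [mL uniq]]; apply: neq.
    by rewrite -(uniq _ mLpT) -(uniq _ mLmT).
  split; first by move=> [_ h].
  split.
    move=> h; have Jmu : min_idempotents (E (Tneg T)) u by rewrite -h.
    by move: Jmu; rewrite Jm => -[Mmu _]; exact: (disj u).
  split => //.
  split.
    split => // L; split; first exact: cases.
    by case=> ->.
  split.
    by apply/seteqP; split => // p [h1 h2]; exfalso; exact: (disj p).
  apply/seteqP; split => // p; rewrite Jp Jm => -[[h1 _] [h2 _]]; exfalso; exact: (disj p).
Qed.

End Dyn.

Lemma final_logic (a1 a2 a3 a4 b1 b2 b3 b4 : Prop) :
  (a1 /\ a2 /\ a3 /\ a4 /\ ~ b1 /\ ~ b2 /\ ~ b3 /\ ~ b4) \/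
  (~ a1 /\ ~ a2 /\ ~ a3 /\ ~ a4 /\ b1 /\ b2 /\ b3 /\ b4) ->
  ((a1 <-> a2) /\ (a1 <-> a3) /\ (a1 <-> a4)) /\
  ((b1 <-> b2) /\ (b1 <-> b3) /\ (b1 <-> b4)) /\
  (((a1 /\ a2 /\ a3 /\ a4) /\ ~ (b1 /\ b2 /\ b3 /\ b4)) \/
   ((b1 /\ b2 /\ b3 /\ b4) /\ ~ (a1 /\ a2 /\ a3 /\ a4))).
Proof. tauto. Qed.

Theorem theorem3p9 (R : realType) (X : metricType R) (T : set R)
  (alpha : R -> X -> X) (M Mp Mm : set (X -> X)) :
  compact [set: X] ->
  is_Z_or_R T ->
  (forall t, T t -> continuous (alpha t)) ->
  alpha 0 = id ->
  (forall s t, T s -> T t -> alpha (s + t) = alpha s \o alpha t) ->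
  minimal_ideal (envelope alpha T) M ->
  minimal_ideal (envelope alpha (Tpos T)) Mp ->
  minimal_ideal (envelope alpha (Tneg T)) Mm ->
  transitive_rel (proximal_on alpha (Tpos T)) ->
  transitive_rel (proximal_on alpha (Tneg T)) ->
  let E := envelope alpha T in
  let c1i := transitive_rel (proximal_on alpha T) in
  let c1ii := exists! L, minimal_left_ideal E L in
  let c1iii := M = Mp /\ Mp = Mm in
  let c1iv := min_idempotents (envelope alpha (Tpos T)) =
              min_idempotents (envelope alpha (Tneg T)) in
  let c2i := ~ transitive_rel (proximal_on alpha T) in
  let c2ii := Mp <> Mm /\
              (forall L, minimal_left_ideal E L <-> (L = Mp \/ L = Mm)) in
  let c2iii := Mp `&` Mm = set0 in
  let c2iv := min_idempotents (envelope alpha (Tpos T)) `&`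
              min_idempotents (envelope alpha (Tneg T)) = set0 in
  ((c1i <-> c1ii) /\ (c1i <-> c1iii) /\ (c1i <-> c1iv)) /\
  ((c2i <-> c2ii) /\ (c2i <-> c2iii) /\ (c2i <-> c2iv)) /\
  (((c1i /\ c1ii /\ c1iii /\ c1iv) /\ ~ (c2i /\ c2ii /\ c2iii /\ c2iv)) \/
   ((c2i /\ c2ii /\ c2iii /\ c2iv) /\ ~ (c1i /\ c1ii /\ c1iii /\ c1iv))).
Proof.
move=> cX hT hcont h0 hadd hM hMp hMm trp trm E c1i c1ii c1iii c1iv c2i c2ii c2iii c2iv.
apply: final_logic.
exact: (@main R X cX T alpha hT hcont h0 hadd M Mp Mm hM hMp hMm trp trm).
Qed.
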